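(* Let $0<r\le2$ and $\lambda_k\in L$. The function $\Phi^0_{-\lambda_k}$ belongs to $\mathcal C^r(X)^K$ if and only if $\lambda_k\in L_r^c$, i.e. $\lambda_k>\left(\tfrac2r-1\right)\rho$.
   Context: Setting: $X=G/H$ a split rank one semisimple symmetric space: $G$ connected semisimple linear Lie group, $\theta$ Cartan involution, $\sigma$ commuting involution, $H=(G^\sigma)_e$, $K=G^\theta$; $\mathfrak a_q=\mathbb RT$ a one-dimensional maximal abelian subspace of $\mathfrak p\cap\mathfrak q$, $a_t=\exp(tT)$ normalized so the positive root $\alpha$ of $\Sigma(\mathfrak a_q,\mathfrak g)$ satisfies $\alpha(T)=1$; every element of $G$ is of the form $ka_th$; $x_0=eH$. With $\mathfrak g^\pm=\{Y:\sigma\theta Y=\pm Y\}$, $m_1^\pm=\dim(\mathfrak g_\alpha\cap\mathfrak g^\pm)$, $m_2^\pm=\dim(\mathfrak g_{2\alpha}\cap\mathfrak g^\pm)$, $\rho=\frac12(m_1^++m_1^-+2m_2^++2m_2^-)$. Let $\lambda_k=\rho-m_1^+-m_2^+-1-2k$, $L=\{\lambda_k:k\in\mathbb N_0,\lambda_k>0\}$, $\gamma_r=(2/r-1)\rho$, $L_r^c=\{\lambda\in L:\lambda>\gamma_r\}$. For $\lambda_k\in L$, $\Phi^0_{-\lambda_k}$ is the left $K$-invariant function on $X$ with $\Phi^0_{-\lambda_k}(ka_th)=(2\cosh t)^{-\lambda_k-\rho}{}_2F_1(\frac{\rho+\lambda_k}{2},-k;1+\lambda_k;\cosh^{-2}t)$.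 $\mathcal C^r(X)^K$ is the space of left $K$-invariant smooth functions $f$ on $X$ with $\sup_{t>0}(1+t)^ne^{(2/r)\rho t}|Df(a_t\cdot x_0)|<\infty$ for all $n\in\mathbb N_0$ and all $G$-invariant differential operators $D$ on $X$. *)

(* Defs.v *)
From Stdlib Require Import Reals.
From Coquelicot Require Import Coquelicot.
Open Scope R_scope.

(* Multiplicities m1p = m_1^+, m1m = m_1^-, m2p = m_2^+, m2m = m_2^-. *)
Definition rho (m1p m1m m2p m2m : nat) : R :=
  (INR m1p + INR m1m + 2 * INR m2p + 2 * INR m2m) / 2.

Definition lam (m1p m1m m2p m2m k : nat) : R :=
  rho m1p m1m m2p m2m - INR m1p - INR m2p - 1 - 2 * INR k.

Definition in_L (m1p m1m m2p m2m : nat) (x : R) : Prop :=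
  exists k : nat, x = lam m1p m1m m2p m2m k /\ 0 < x.

Definition gam (m1p m1m m2p m2m : nat) (r : R) : R :=
  (2 / r - 1) * rho m1p m1m m2p m2m.

Definition in_Lrc (m1p m1m m2p m2m : nat) (r x : R) : Prop :=
  in_L m1p m1m m2p m2m x /\ gam m1p m1m m2p m2m r < x.

Fixpoint poch (a : R) (j : nat) : R :=
  match j with
  | O => 1
  | S j' => poch a j' * (a + INR j')
  end.

Definition hyp2F1 (a b c z : R) : R :=
  Series (fun j => poch a j * poch b j / (poch c j * INR (Factorial.fact j)) * z ^ j).

(* Radial profile t |-> Phi^0_{-lambda_k}(k a_t h) *)
Definition Phi0 (m1p m1m m2p m2m k : nat) (t : R) : R :=
  let l := lam m1p m1m m2p m2m k in
  let p := rho m1p m1m m2p m2m in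
  Rpower (2 * cosh t) (- l - p) *
  hyp2F1 ((p + l) / 2) (- INR k) (1 + l) (/ (cosh t) ^ 2).

(* Radial part (on left-K-invariant functions, in the coordinate t of a_t)
   of the Laplace(-Casimir) operator of X = G/H, which generates the algebra
   D(X) of G-invariant differential operators on the rank one space X.
   Density: sinh^{m1+}(t) cosh^{m1-}(t) sinh^{m2+}(2t) cosh^{m2-}(2t). *)
Definition radial_coeff (m1p m1m m2p m2m : nat) (t : R) : R :=
  INR m1p * (cosh t / sinh t) + INR m1m * (sinh t / cosh t)
  + 2 * INR m2p * (cosh (2 * t) / sinh (2 * t))
  + 2 * INR m2m * (sinh (2 * t) / cosh (2 * t)).

Definition radial_laplacian (m1p m1m m2p m2m : nat) (F : R -> R) (t : R) : R :=
  Derive_n F 2 t + radial_coeff m1p m1m m2p m2m t * Derive F t.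

(* Radial version of C^r(X)^K: smooth profile, and for every n and every
   D = Delta^j in D(X) = C[Delta],
   sup_{t>0} (1+t)^n e^{(2/r) rho t} |D f(a_t . x0)| < oo. *)
Definition in_CrK (m1p m1m m2p m2m : nat) (r : R) (F : R -> R) : Prop :=
  (forall (m : nat) (t : R), ex_derive_n F m t) /\
  forall j n : nat, exists C : R, forall t : R, 0 < t ->
    (1 + t) ^ n * exp (2 / r * rho m1p m1m m2p m2m * t)
      * Rabs (Nat.iter j (radial_laplacian m1p m1m m2p m2m) F t) <= C.

(* Main.v *)
Require Import Defs.
From Stdlib Require Import Reals Lra Lia List.
From Coquelicot Require Import Coquelicot.
Open Scope R_scope.

Record tm := mk { tc : R; ta : R; tq : nat }.

Definition tU (m : tm) (u : R) : R :=
  tc m * Rpower u (ta m) * / (2 * u ^ 2 - 1) ^ tq m.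

Fixpoint evalU (l : list tm) (u : R) : R :=
  match l with nil => 0 | m :: l' => tU m u + evalU l' u end.

Definition dUm (m : tm) : list tm :=
  mk (tc m * ta m) (ta m - 1) (tq m) ::
  mk (- 4 * INR (tq m) * tc m) (ta m + 1) (S (tq m)) :: nil.

Definition dU (l : list tm) : list tm := flat_map dUm l.

Lemma evalU_app l1 l2 u : evalU (l1 ++ l2) u = evalU l1 u + evalU l2 u.
Proof. induction l1; simpl; [lra|rewrite IHl1; lra]. Qed.

Lemma Rpower_ext_der a u : 0 < u ->
  is_derive (fun x => Rpower x a) u (a * Rpower u (a - 1)).
Proof. intros; apply is_derive_Reals, derivable_pt_lim_power; auto. Qed.

Lemma is_derive_eq (f : R -> R) x l l' : is_derive f x l -> l = l' -> is_derive f x l'.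
Proof. intros H ->; exact H. Qed.

Lemma tU_der m u : 1 < u -> is_derive (tU m) u (evalU (dUm m) u).
Proof.
  intros Hu. unfold tU, dUm; simpl.
  destruct m as [c a q]; simpl.
  assert (Hw : 0 < 2 * u ^ 2 - 1) by nra.
  unfold Rpower.
  auto_derive.
  { repeat split; try lra. apply pow_nonzero; lra. }
  unfold tU, Rpower; simpl tc; simpl ta; simpl tq.
  replace ((a - 1) * ln u) with (a * ln u + - ln u) by ring.
  replace ((a + 1) * ln u) with (a * ln u + ln u) by ring.
  rewrite !exp_plus, exp_Ropp, exp_ln by lra.
  set (E := exp (a * ln u)).
  replace (2 * (u * (u * 1)) + - (1)) with (2 * u ^ 2 - 1) by ring.
  set (W := 2 * u ^ 2 - 1) in *.
  destruct q as [|q].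
  - simpl. field. lra.
  - simpl Init.Nat.pred. rewrite S_INR. simpl pow.
    assert (W ^ q <> 0) by (apply pow_nonzero; lra).
    field. repeat split; lra.
Qed.

Lemma evalU_der l u : 1 < u -> is_derive (evalU l) u (evalU (dU l) u).
Proof.
  intros Hu. induction l as [|m l IH].
  - apply (is_derive_const (K:=R_AbsRing) 0).
  - change (dU (m :: l)) with (dUm m ++ dU l). rewrite evalU_app.
    apply (is_derive_plus (tU m) (evalU l)); [apply tU_der; auto | exact IH].
Qed.

Definition mulm (m1 m2 : tm) : tm := mk (tc m1 * tc m2) (ta m1 + ta m2) (tq m1 + tq m2).
Definition mulL (A B : list tm) : list tm := flat_map (fun m => map (mulm m) B) A.

Lemma tU_mul m1 m2 u : 1 < u -> tU (mulm m1 m2) u = tU m1 u * tU m2 u.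
Proof.
  intros Hu. unfold tU, mulm; simpl. rewrite Rpower_plus, pow_add.
  assert (0 < 2 * u ^ 2 - 1) by nra.
  assert ((2 * u ^ 2 - 1) ^ tq m1 <> 0) by (apply pow_nonzero; lra).
  assert ((2 * u ^ 2 - 1) ^ tq m2 <> 0) by (apply pow_nonzero; lra).
  field; auto.
Qed.

Lemma evalU_map m B u : 1 < u -> evalU (map (mulm m) B) u = tU m u * evalU B u.
Proof. intros Hu; induction B; simpl; [ring|rewrite IHB, tU_mul; auto; ring]. Qed.

Lemma evalU_mulL A B u : 1 < u -> evalU (mulL A B) u = evalU A u * evalU B u.
Proof.
  intros Hu; induction A; simpl; [ring|].
  unfold mulL in *; simpl. rewrite evalU_app, evalU_map, IHA; auto; ring.
Qed.

Definition ordinv (B0 : R) (l : list tm) : Prop :=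
  List.Forall (fun m => ta m - 2 * INR (tq m) <= B0) l.

Lemma ordinv_app B0 l1 l2 : ordinv B0 l1 -> ordinv B0 l2 -> ordinv B0 (l1 ++ l2).
Proof. unfold ordinv; intros; apply List.Forall_app; auto. Qed.

Lemma ordinv_weak B0 B0' l : B0 <= B0' -> ordinv B0 l -> ordinv B0' l.
Proof. unfold ordinv; intros H H1. eapply List.Forall_impl; [|exact H1]. simpl; intros; lra. Qed.

Lemma ordinv_dU B0 l : ordinv B0 l -> ordinv (B0 - 1) (dU l).
Proof.
  unfold ordinv, dU; induction 1; simpl; [constructor|].
  constructor; [simpl; lra|]. constructor; [cbn [ta tq]; rewrite S_INR; lra|]. auto.
Qed.

Lemma ordinv_mulL d B0 A B : ordinv d A -> ordinv B0 B -> ordinv (d + B0) (mulL A B).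
Proof.
  unfold ordinv, mulL; intros HA HB; induction HA; simpl; [constructor|].
  apply List.Forall_app; split; auto.
  apply List.Forall_map. eapply List.Forall_impl; [|exact HB]. intros m Hm; simpl.
  rewrite plus_INR. lra.
Qed.

Lemma cosh_gt1 x : 0 < x -> 1 < cosh x.
Proof.
  intros Hx. unfold cosh. rewrite exp_Ropp.
  assert (1 < exp x) by (rewrite <- exp_0; apply exp_increasing; lra).
  assert (0 < / exp x) by (apply Rinv_0_lt_compat; lra).
  assert (exp x * / exp x = 1) by (field; lra).
  nra.
Qed.

Lemma sinh_pos x : 0 < x -> 0 < sinh x.
Proof.
  intros Hx. unfold sinh. rewrite exp_Ropp.
  assert (1 < exp x) by (rewrite <- exp_0; apply exp_increasing; lra).
  assert (0 < / exp x) by (apply Rinv_0_lt_compat; lra).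
  assert (exp x * / exp x = 1) by (field; lra).
  nra.
Qed.

Lemma sinh_sq x : sinh x ^ 2 = cosh x ^ 2 - 1.
Proof.
  unfold sinh, cosh. rewrite exp_Ropp.
  assert (0 < exp x) by apply exp_pos. field. lra.
Qed.

Lemma cosh2 x : cosh (2 * x) = 2 * cosh x ^ 2 - 1.
Proof.
  unfold cosh. replace (- (2 * x)) with (- x + - x) by ring.
  replace (2 * x) with (x + x) by ring. rewrite !exp_plus, !exp_Ropp.
  assert (0 < exp x) by apply exp_pos. field. lra.
Qed.

Lemma sinh2 x : sinh (2 * x) = 2 * sinh x * cosh x.
Proof.
  unfold sinh, cosh. replace (- (2 * x)) with (- x + - x) by ring.
  replace (2 * x) with (x + x) by ring. rewrite !exp_plus, !exp_Ropp.
  assert (0 < exp x) by apply exp_pos. field. lra.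
Qed.

Lemma cosh_der x : is_derive cosh x (sinh x).
Proof. apply is_derive_Reals, derivable_pt_lim_cosh. Qed.
Lemma sinh_der x : is_derive sinh x (cosh x).
Proof. apply is_derive_Reals, derivable_pt_lim_sinh. Qed.

Lemma Rpower_nat u n : 0 < u -> Rpower u (INR n) = u ^ n.
Proof. intros; apply Rpower_pow; auto. Qed.

Lemma Rpw1 u : 0 < u -> Rpower u 1 = u.
Proof. intros; apply Rpower_1; auto. Qed.
Lemma Rpwm1 u : 0 < u -> Rpower u (-1) = / u.
Proof. intros; rewrite <- (Rpower_1 u) at 2 by auto; rewrite <- Rpower_Ropp; reflexivity. Qed.
Lemma Rpw2 u : 0 < u -> Rpower u 2 = u ^ 2.
Proof. intros; replace 2 with (INR 2) by (simpl; ring); apply Rpower_nat; auto. Qed.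
Lemma Rpw3 u : 0 < u -> Rpower u 3 = u ^ 3.
Proof. intros; replace 3 with (INR 3) by (simpl; ring); apply Rpower_nat; auto. Qed.



Section Lap.
Variables m1p m1m m2p m2m : nat.

Definition coefL : list tm :=
  mk (INR m1p) 1 0 :: mk (INR m1m) 1 0 :: mk (- INR m1m) (-1) 0 ::
  mk (2 * INR m2p) 1 0 :: mk (- INR m2p) (-1) 0 ::
  mk (4 * INR m2m) 3 1 :: mk (-4 * INR m2m) 1 1 :: nil.

Definition LL (l : list tm) : list tm :=
  mulL (mk 1 1 0 :: nil) (dU l) ++
  mulL (mk 1 2 0 :: mk (-1) 0 0 :: nil) (dU (dU l)) ++
  mulL coefL (dU l).

Lemma coefL_eval t : 0 < t ->
  evalU coefL (cosh t) = radial_coeff m1p m1m m2p m2m t * sinh t.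
Proof.
  intros Ht.
  assert (Hc := cosh_gt1 t Ht). assert (Hs := sinh_pos t Ht).
  assert (Hsq := sinh_sq t).
  unfold radial_coeff. rewrite cosh2, sinh2.
  unfold coefL, tU; simpl evalU; cbn [tc ta tq].
  assert (Hu : 0 < cosh t) by lra.
  unfold tU; cbn [tc ta tq].   rewrite (Rpw1 _ Hu), (Rpwm1 _ Hu), (Rpw3 _ Hu).
  simpl pow.
  set (c := cosh t) in *; set (s := sinh t) in *. rewrite !Rinv_1, !Rmult_1_r. field_simplify; [rewrite Hsq; field; nra | repeat split; nra | repeat split; nra].
Qed.

Lemma loc_pos x : 0 < x -> locally x (fun y => 0 < y).
Proof. intros H. apply (open_gt 0). exact H. Qed.

Lemma comp_der l x : 0 < x ->
  is_derive (fun y => evalU l (cosh y)) x (sinh x * evalU (dU l) (cosh x)).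
Proof.
  intros Hx.
  apply (is_derive_comp (evalU l) cosh x).
  - apply evalU_der, cosh_gt1; auto.
  - apply cosh_der.
Qed.

Lemma step F l : (forall x, 0 < x -> F x = evalU l (cosh x)) ->
  forall t, 0 < t -> radial_laplacian m1p m1m m2p m2m F t = evalU (LL l) (cosh t).
Proof.
  intros HF t Ht.
  assert (H1 : forall x, 0 < x -> Derive F x = sinh x * evalU (dU l) (cosh x)).
  { intros x Hx. apply is_derive_unique.
    apply (is_derive_ext_loc (fun y => evalU l (cosh y))); [|apply comp_der; auto].
    generalize (loc_pos x Hx). apply filter_imp. intros y Hy; rewrite HF; auto. }
  assert (H2 : Derive (Derive F) t =
     cosh t * evalU (dU l) (cosh t) + sinh t * (sinh t * evalU (dU (dU l)) (cosh t))).
  { apply is_derive_unique.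
    apply (is_derive_ext_loc (fun y => sinh y * evalU (dU l) (cosh y))).
    - generalize (loc_pos t Ht). apply filter_imp. intros y Hy; rewrite H1; auto.
    - apply (is_derive_mult sinh (fun y => evalU (dU l) (cosh y))).
      + apply sinh_der.
      + apply comp_der; auto.
      + intros; apply Rmult_comm. }
  unfold radial_laplacian. simpl Derive_n.
  assert (E : Derive (fun x => Derive (fun x0 => F x0) x) t = Derive (Derive F) t) by reflexivity.
  rewrite E, H2, H1 by auto.
  unfold LL. rewrite !evalU_app, !evalU_mulL by (apply cosh_gt1; auto).
  rewrite coefL_eval by auto.
  assert (Hu : 0 < cosh t) by (generalize (cosh_gt1 t Ht); lra).
  unfold tU; simpl evalU; cbn [tc ta tq].
  simpl evalU. unfold tU; cbn [tc ta tq]. rewrite (Rpw1 _ Hu), (Rpw2 _ Hu), Rpower_O by auto.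
  set (D1 := evalU (dU l) (cosh t)); set (D2 := evalU (dU (dU l)) (cosh t)). simpl pow. rewrite !Rinv_1. replace (sinh t * (sinh t * D2)) with (sinh t ^ 2 * D2) by ring. rewrite sinh_sq. ring.
Qed.

Lemma ordinv_LL B l : ordinv B l -> ordinv B (LL l).
Proof.
  intros H. unfold LL.
  assert (H1 := ordinv_dU _ _ H). assert (H2 := ordinv_dU _ _ H1).
  assert (A1 : ordinv 1 (mk 1 1 0 :: nil)) by (unfold ordinv; repeat constructor; simpl; lra).
  assert (A2 : ordinv 2 (mk 1 2 0 :: mk (-1) 0 0 :: nil)) by (unfold ordinv; repeat constructor; simpl; lra).
  assert (A3 : ordinv 1 coefL) by (unfold ordinv, coefL; repeat constructor; simpl; lra).
  apply ordinv_app; [|apply ordinv_app].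
  - eapply ordinv_weak; [|apply (ordinv_mulL _ _ _ _ A1 H1)]. lra.
  - eapply ordinv_weak; [|apply (ordinv_mulL _ _ _ _ A2 H2)]. lra.
  - eapply ordinv_weak; [|apply (ordinv_mulL _ _ _ _ A3 H1)]. lra.
Qed.

Lemma iter_rep F l : (forall x, 0 < x -> F x = evalU l (cosh x)) ->
  forall j t, 0 < t ->
  Nat.iter j (radial_laplacian m1p m1m m2p m2m) F t = evalU (Nat.iter j LL l) (cosh t).
Proof.
  intros HF j. induction j as [|j IH]; intros t Ht.
  - simpl. auto.
  - simpl. apply step; auto.
Qed.

End Lap.

Definition tT (m : tm) (t : R) : R := tc m * sinh t ^ tq m * Rpower (cosh t) (ta m).
Fixpoint evalT (l : list tm) (t : R) : R :=
  match l with nil => 0 | m :: l' => tT m t + evalT l' t end.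
Definition dTm (m : tm) : list tm :=
  mk (tc m * INR (tq m)) (ta m + 1) (pred (tq m)) ::
  mk (tc m * ta m) (ta m - 1) (S (tq m)) :: nil.
Definition dT (l : list tm) : list tm := flat_map dTm l.

Lemma evalT_app l1 l2 t : evalT (l1 ++ l2) t = evalT l1 t + evalT l2 t.
Proof. induction l1; simpl; [lra|rewrite IHl1; lra]. Qed.

Lemma cosh_pos t : 0 < cosh t.
Proof. unfold cosh. generalize (exp_pos t) (exp_pos (-t)); lra. Qed.

Lemma tT_der m t : is_derive (tT m) t (evalT (dTm m) t).
Proof.
  destruct m as [c a e]. unfold tT, dTm; simpl evalT; cbn [tc ta tq].
  assert (Hc := cosh_pos t).
  unfold tT; cbn [tc ta tq].
  unfold Rpower. auto_derive; [lra|].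
  replace ((a + 1) * ln (cosh t)) with (a * ln (cosh t) + ln (cosh t)) by ring.
  replace ((a - 1) * ln (cosh t)) with (a * ln (cosh t) + - ln (cosh t)) by ring.
  rewrite !exp_plus, exp_Ropp, exp_ln by lra.
  simpl pow. field. lra.
Qed.

Lemma evalT_der l t : is_derive (evalT l) t (evalT (dT l) t).
Proof.
  induction l as [|m l IH].
  - apply (is_derive_const (K:=R_AbsRing) 0).
  - change (dT (m :: l)) with (dTm m ++ dT l). rewrite evalT_app.
    apply (is_derive_plus (tT m) (evalT l)); [apply tT_der | exact IH].
Qed.

Lemma evalT_Derive_n n : forall l t, Derive_n (evalT l) n t = evalT (Nat.iter n dT l) t.
Proof.
  induction n as [|n IH]; intros l t.
  - reflexivity.
  - simpl. rewrite (Derive_ext _ (evalT (Nat.iter n dT l))) by (intros; apply IH).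
    apply is_derive_unique, evalT_der.
Qed.

Lemma evalT_smooth l n t : ex_derive_n (evalT l) n t.
Proof.
  destruct n as [|n]; simpl; [exact I|].
  apply (ex_derive_ext (evalT (Nat.iter n dT l))).
  - intros; symmetry; apply evalT_Derive_n.
  - eexists; apply evalT_der.
Qed.

Fixpoint sabs (l : list tm) : R :=
  match l with nil => 0 | m :: l' => Rabs (tc m) + sabs l' end.

Lemma sabs_nonneg l : 0 <= sabs l.
Proof. induction l; simpl; [lra|generalize (Rabs_pos (tc a)); lra]. Qed.

Lemma Rpower_div u a b : 0 < u -> Rpower u a * / Rpower u b = Rpower u (a - b).
Proof.
  intros Hu. unfold Rminus. rewrite Rpower_plus, Rpower_Ropp. reflexivity.
Qed.

Lemma tU_bound B m u : 1 < u -> ta m - 2 * INR (tq m) <= - B ->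
  Rabs (tU m u) <= Rabs (tc m) * Rpower u (- B).
Proof.
  intros Hu Ho. unfold tU.
  assert (Hw : 0 < 2 * u ^ 2 - 1) by nra.
  assert (Hwq : 0 < (2 * u ^ 2 - 1) ^ tq m) by (apply pow_lt; lra).
  assert (Hp : 0 < Rpower u (ta m)) by (apply exp_pos).
  rewrite Rmult_assoc, Rabs_mult.
  apply Rmult_le_compat_l; [apply Rabs_pos|].
  rewrite Rabs_right.
  2: { apply Rle_ge, Rmult_le_pos; [lra| left; apply Rinv_0_lt_compat; lra]. }
  assert (Hq : Rpower u (INR (2 * tq m)) <= (2 * u ^ 2 - 1) ^ tq m).
  { rewrite Rpower_nat by lra. rewrite pow_mult. apply pow_incr. nra. }
  assert (Hq0 : 0 < Rpower u (INR (2 * tq m))) by apply exp_pos.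
  apply Rle_trans with (Rpower u (ta m) * / Rpower u (INR (2 * tq m))).
  - apply Rmult_le_compat_l; [lra|]. apply Rinv_le_contravar; lra.
  - rewrite Rpower_div by lra. apply Rle_Rpower; [lra|]. rewrite mult_INR. simpl INR. lra.
Qed.

Lemma evalU_bound B l u : 1 < u -> ordinv (- B) l ->
  Rabs (evalU l u) <= sabs l * Rpower u (- B).
Proof.
  intros Hu. unfold ordinv. induction 1 as [|m l Hm Hl IH]; simpl.
  - rewrite Rabs_R0. lra.
  - eapply Rle_trans; [apply Rabs_triang|].
    generalize (tU_bound B m u Hu Hm). lra.
Qed.

Lemma cosh_ge t : exp t / 2 <= cosh t.
Proof. unfold cosh. generalize (exp_pos (-t)); lra. Qed.

Lemma exp_le' x y : x <= y -> exp x <= exp y.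
Proof. intros [H|H]; [left; apply exp_increasing; auto| subst; lra]. Qed.
Lemma ln_le' x y : 0 < x -> x <= y -> ln x <= ln y.
Proof. intros Hx [H|H]; [left; apply ln_increasing; auto| subst; lra]. Qed.

Lemma ln_cosh_ge t : t - ln 2 <= ln (cosh t).
Proof.
  assert (E : ln (exp t / 2) = t - ln 2).
  { unfold Rdiv. rewrite ln_mult, ln_exp, ln_Rinv; try lra; apply exp_pos || lra. }
  rewrite <- E. apply ln_le'; [generalize (exp_pos t); lra| apply cosh_ge].
Qed.

Lemma Rpower_cosh_bound B t : 0 <= B ->
  Rpower (cosh t) (- B) <= exp (B * ln 2) * exp (- B * t).
Proof.
  intros HB. unfold Rpower. rewrite <- exp_plus. apply exp_le'.
  generalize (ln_cosh_ge t). nra.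
Qed.

Lemma exp_pow' x k : exp x ^ k = exp (INR k * x).
Proof.
  induction k as [|k IH].
  - simpl. rewrite Rmult_0_l, exp_0. reflexivity.
  - rewrite S_INR. simpl pow. rewrite IH. rewrite <- exp_plus. f_equal. ring.
Qed.

Lemma poly_exp n d : 0 < d -> exists M, forall t, 0 <= t -> (1 + t) ^ n * exp (- d * t) <= M.
Proof.
  intros Hd. destruct n as [|n].
  - exists 1. intros t Ht. simpl. rewrite Rmult_1_l. rewrite <- exp_0. apply exp_le'. nra.
  - set (c := d / INR (S n)).
    assert (Hn : 0 < INR (S n)) by (apply lt_0_INR; lia).
    assert (Hc : 0 < c) by (unfold c; apply Rdiv_lt_0_compat; lra).
    exists ((exp c / c) ^ S n). intros t Ht.
    assert (H1 : 1 + t <= exp c / c * exp (c * t)).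
    { assert (c * (1 + t) <= exp (c * (1 + t))) by (generalize (exp_ineq1_le (c * (1 + t))); lra).
      replace (c * (1 + t)) with (c + c * t) in H by ring. rewrite exp_plus in H.
      apply Rmult_le_reg_l with c; auto. unfold Rdiv. field_simplify; lra. }
    apply Rle_trans with ((exp c / c * exp (c * t)) ^ S n * exp (- d * t)).
    + apply Rmult_le_compat_r; [left; apply exp_pos|]. apply pow_incr; lra.
    + rewrite Rpow_mult_distr, Rmult_assoc.
      assert (E : exp (c * t) ^ S n * exp (- d * t) = 1).
      { rewrite <- exp_0. replace 0 with (INR (S n) * (c * t) + - d * t) by (unfold c; field; lra).
        rewrite exp_plus. f_equal. apply exp_pow'. }
      rewrite E. lra.
Qed.

Lemma poch_zero k j : (k < j)%nat -> poch (- INR k) j = 0.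
Proof.
  induction j as [|j IH]; intros H; [lia|].
  simpl. destruct (Nat.eq_dec k j) as [->|Hne].
  - ring.
  - rewrite IH by lia. ring.
Qed.

Lemma sum_n_stable (a : nat -> R) K n : (forall j, (K < j)%nat -> a j = 0) ->
  (K <= n)%nat -> sum_n a n = sum_n a K.
Proof.
  intros Ha Hn. induction Hn as [|n Hn IH]; [reflexivity|].
  rewrite sum_Sn, IH, Ha by lia. apply (plus_zero_r (G:=R_AbelianGroup)).
Qed.

Lemma series_finite (a : nat -> R) K : (forall j, (K < j)%nat -> a j = 0) ->
  Series a = sum_n a K.
Proof.
  intros Ha. apply is_series_unique.
  assert (H : is_lim_seq (sum_n a) (sum_n a K)).
  { apply (is_lim_seq_ext_loc (fun _ => sum_n a K)); [|apply is_lim_seq_const].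
    exists K. intros n Hn. symmetry. apply sum_n_stable; auto. }
  exact H.
Qed.

Lemma Rpower_key Sx u j : 0 < u ->
  Rpower u (- Sx - 2 * INR j) = Rpower u (- Sx) * (/ u ^ 2) ^ j.
Proof.
  intros Hu. unfold Rminus. rewrite Rpower_plus. f_equal.
  rewrite Rpower_Ropp. replace (2 * INR j) with (INR (2 * j)) by (rewrite mult_INR; simpl; ring).
  rewrite Rpower_nat by auto. rewrite pow_inv, pow_mult. reflexivity.
Qed.

Definition l0of (Sx : R) (b : nat -> R) (K : nat) : list tm :=
  map (fun j => mk (Rpower 2 (- Sx) * b j) (- Sx - 2 * INR j) 0) (seq 0 (S K)).

Lemma l0_evalU Sx b K u : 0 < u ->
  Rpower (2 * u) (- Sx) * sum_n (fun j => b j * (/ u ^ 2) ^ j) K = evalU (l0of Sx b K) u.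
Proof.
  intros Hu. unfold l0of. induction K as [|K IH].
  - rewrite sum_O. simpl. unfold tU; cbn [tc ta tq].
    replace (- Sx - 2 * 0) with (- Sx) by ring.
    rewrite <- Rpower_mult_distr by lra. simpl. field.
  - rewrite sum_Sn, seq_S, map_app, evalU_app, <- IH. rewrite Nat.add_0_l. cbn [map evalU]. unfold tU; cbn [tc ta tq].
    change plus with Rplus. rewrite Rpower_key by auto.
    rewrite <- Rpower_mult_distr by lra. simpl pow. rewrite Rinv_1; ring.
Qed.

Lemma l0_evalT Sx b K t :
  Rpower (2 * cosh t) (- Sx) * sum_n (fun j => b j * (/ cosh t ^ 2) ^ j) K = evalT (l0of Sx b K) t.
Proof.
  assert (Hu := cosh_pos t). unfold l0of. induction K as [|K IH].
  - rewrite sum_O. simpl. unfold tT; cbn [tc ta tq].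
    replace (- Sx - 2 * 0) with (- Sx) by ring.
    rewrite <- Rpower_mult_distr by lra. simpl. field.
  - rewrite sum_Sn, seq_S, map_app, evalT_app, <- IH. rewrite Nat.add_0_l. cbn [map evalT]. unfold tT; cbn [tc ta tq].
    change plus with Rplus. rewrite Rpower_key by auto.
    rewrite <- Rpower_mult_distr by lra. simpl pow. ring.
Qed.

Lemma l0_ordinv Sx b K : ordinv (- Sx) (l0of Sx b K).
Proof.
  unfold ordinv, l0of. apply List.Forall_map. apply List.Forall_forall.
  intros j _. cbn [ta tq]. simpl INR. generalize (pos_INR j). lra.
Qed.

Definition bk (m1p m1m m2p m2m k : nat) (j : nat) : R :=
  let l := lam m1p m1m m2p m2m k in
  let p := rho m1p m1m m2p m2m in
  poch ((p + l) / 2) j * poch (- INR k) j / (poch (1 + l) j * INR (Factorial.fact j)).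

Lemma Phi0_eq m1p m1m m2p m2m k t :
  Phi0 m1p m1m m2p m2m k t =
  Rpower (2 * cosh t) (- (lam m1p m1m m2p m2m k + rho m1p m1m m2p m2m)) *
  sum_n (fun j => bk m1p m1m m2p m2m k j * (/ cosh t ^ 2) ^ j) k.
Proof.
  unfold Phi0, hyp2F1. cbv zeta.
  rewrite (series_finite _ k).
  - unfold bk. cbv zeta. f_equal. f_equal. ring.
  - intros j Hj. rewrite poch_zero by auto. unfold Rdiv. ring.
Qed.

Lemma bk0 m1p m1m m2p m2m k : bk m1p m1m m2p m2m k 0 = 1.
Proof. unfold bk. simpl. field. Qed.

Lemma P_bound (b : nat -> R) K y : 0 <= y <= 1 ->
  Rabs (sum_n (fun j => b j * y ^ j) K - b 0%nat) <= sum_n (fun j => Rabs (b j)) K * y.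
Proof.
  intros Hy. induction K as [|K IH].
  - rewrite !sum_O. simpl. replace (b 0%nat * 1 - b 0%nat) with 0 by ring.
    rewrite Rabs_R0. apply Rmult_le_pos; [apply Rabs_pos|lra].
  - rewrite !sum_Sn. change plus with Rplus.
    replace (sum_n (fun j => b j * y ^ j) K + b (S K) * y ^ S K - b 0%nat)
      with ((sum_n (fun j => b j * y ^ j) K - b 0%nat) + b (S K) * y ^ S K) by ring.
    eapply Rle_trans; [apply Rabs_triang|].
    rewrite Rabs_mult, (Rabs_right (y ^ S K)) by (apply Rle_ge, pow_le; lra).
    assert (HyK : y ^ S K <= y).
    { simpl. assert (y ^ K <= 1) by (rewrite <- (pow1 K); apply pow_incr; lra). nra. }
    assert (0 <= Rabs (b (S K))) by apply Rabs_pos.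
    nra.
Qed.

Lemma cosh_le_exp t : 0 <= t -> cosh t <= exp t.
Proof.
  intros Ht. unfold cosh.
  assert (exp (- t) <= exp t) by (apply exp_le'; lra). lra.
Qed.

Lemma cosh_ge1 t : 1 <= cosh t.
Proof.
  unfold cosh. rewrite exp_Ropp.
  assert (0 < exp t) by apply exp_pos.
  set (X := exp t) in *.
  assert (0 < / X) by (apply Rinv_0_lt_compat; lra).
  assert (0 <= (X - 1) ^ 2 * / X) by (apply Rmult_le_pos; [apply pow2_ge_0|lra]).
  assert (E : (X - 1) ^ 2 * / X = X + / X - 2) by (field; lra).
  lra.
Qed.

Lemma y_small t : 0 <= t -> / cosh t ^ 2 <= 2 / (1 + t).
Proof.
  intros Ht. assert (H1 := cosh_ge1 t). assert (H2 := cosh_ge t).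
  assert (H3 := exp_ineq1_le t).
  assert (cosh t <= cosh t ^ 2) by (simpl; nra).
  apply Rle_trans with (/ cosh t).
  - apply Rinv_le_contravar; lra.
  - unfold Rdiv. rewrite <- (Rinv_inv 2) at 1. rewrite <- Rinv_mult.
    apply Rinv_le_contravar; [lra|]. lra.
Qed.

Lemma rho_nonneg m1p m1m m2p m2m : 0 <= rho m1p m1m m2p m2m.
Proof.
  unfold rho. generalize (pos_INR m1p) (pos_INR m1m) (pos_INR m2p) (pos_INR m2m). lra.
Qed.

Lemma iter_ordinv m1p m1m m2p m2m B l j : ordinv B l -> ordinv B (Nat.iter j (LL m1p m1m m2p m2m) l).
Proof. intros H; induction j; simpl; auto. apply ordinv_LL; auto. Qed.

Lemma sum_abs_nonneg (b : nat -> R) K : 0 <= sum_n (fun j => Rabs (b j)) K.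
Proof.
  induction K as [|K IH]; [rewrite sum_O; apply Rabs_pos|].
  rewrite sum_Sn. change plus with Rplus. generalize (Rabs_pos (b (S K))). lra.
Qed.

Theorem lemma3p2 (m1p m1m m2p m2m k : nat) (r : R) :
  0 < r <= 2 ->
  in_L m1p m1m m2p m2m (lam m1p m1m m2p m2m k) ->
  (in_CrK m1p m1m m2p m2m r (Phi0 m1p m1m m2p m2m k) <->
   in_Lrc m1p m1m m2p m2m r (lam m1p m1m m2p m2m k)).
Proof.
  intros [Hr0 Hr2] HL.
  assert (Hlpos : 0 < lam m1p m1m m2p m2m k) by (destruct HL as [k' [_ H]]; exact H).
  assert (Hp := rho_nonneg m1p m1m m2p m2m).
  set (lm := lam m1p m1m m2p m2m k) in *.
  set (p := rho m1p m1m m2p m2m) in *.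
  set (Sx := lm + p).
  set (b := bk m1p m1m m2p m2m k).
  set (l0 := l0of Sx b k).
  assert (HPhi : forall t, Phi0 m1p m1m m2p m2m k t = Rpower (2 * cosh t) (- Sx) * sum_n (fun j => b j * (/ cosh t ^ 2) ^ j) k)
    by (intros; apply Phi0_eq).
  split.
  - intros [_ Hb]. split; [exact HL|]. unfold gam.
    destruct (Rlt_or_le ((2 / r - 1) * p) lm) as [H|H]; [exact H|exfalso].
    destruct (Hb 0%nat 1%nat) as [C HC]. simpl Nat.iter in HC.
    set (B := sum_n (fun j => Rabs (b j)) k).
    assert (HB : 0 <= B).
    { apply sum_abs_nonneg. }
    set (c := exp (- Sx * ln 2) / 2).
    assert (Hc : 0 < c) by (unfold c; generalize (exp_pos (- Sx * ln 2)); lra).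
    set (t := 2 * (2 * B + 2) + Rabs C / c + 1).
    assert (Ht : 2 * (2 * B + 2) <= t).
    { unfold t. assert (0 <= Rabs C / c) by (apply Rdiv_le_0_compat; [apply Rabs_pos|lra]). lra. }
    assert (Ht0 : 0 < t) by lra.
    assert (Htc : C < (1 + t) * c).
    { assert (Rabs C < t * c).
      { unfold t. assert (0 <= 2 * (2 * B + 2)) by lra.
        replace ((2 * (2 * B + 2) + Rabs C / c + 1) * c) with (2 * (2 * B + 2) * c + Rabs C + c) by (field; lra).
        assert (0 <= 2 * (2 * B + 2) * c) by (apply Rmult_le_pos; lra). lra. }
      generalize (Rle_abs C). nra. }
    specialize (HC t Ht0).
    set (y := / cosh t ^ 2).
    assert (Hy0 : 0 < y) by (unfold y; apply Rinv_0_lt_compat; apply pow_lt; apply cosh_pos).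
    assert (Hy1 : y <= 1 / (2 * B + 2)).
    { apply Rle_trans with (2 / (1 + t)); [apply y_small; lra|].
      replace (2 / (1 + t)) with (/ ((1 + t) / 2)) by (field; lra).
      unfold Rdiv at 2. rewrite Rmult_1_l. apply Rinv_le_contravar; lra. }
    assert (HP : 1 / 2 <= sum_n (fun j => b j * y ^ j) k).
    { assert (Hyle : 0 <= y <= 1).
      { split; [lra|]. apply Rle_trans with (1 / (2 * B + 2)); auto.
        unfold Rdiv; rewrite Rmult_1_l. rewrite <- Rinv_1. apply Rinv_le_contravar; lra. }
      generalize (P_bound b k y Hyle). fold B. unfold b at 2. rewrite bk0.
      intros HPb.
      assert (B * y <= B / (2 * B + 2)).
      { unfold Rdiv. apply Rmult_le_compat_l; auto. unfold Rdiv in Hy1. lra. }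
      assert (B / (2 * B + 2) < 1 / 2).
      { apply Rmult_lt_reg_r with (2 * (2 * B + 2)); [lra|].
        unfold Rdiv. field_simplify; lra. }
      revert HPb. generalize (sum_n (fun j : nat => b j * y ^ j) k). intros s Hs.
      assert (1 - s <= Rabs (s - 1)) by (rewrite Rabs_minus_sym; apply Rle_abs).
      lra. }
    assert (HR : exp (- Sx * ln 2) * exp (- Sx * t) <= Rpower (2 * cosh t) (- Sx)).
    { unfold Rpower. rewrite <- exp_plus. apply exp_le'.
      assert (ln (2 * cosh t) <= ln 2 + t).
      { rewrite ln_mult by (try apply cosh_pos; lra). generalize (ln_le' _ _ (cosh_pos t) (cosh_le_exp t ltac:(lra))).
        rewrite ln_exp. lra. }
      assert (0 <= Sx) by (unfold Sx; lra). nra. }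
    assert (HPhi_t : c * exp (- Sx * t) <= Rabs (Phi0 m1p m1m m2p m2m k t)).
    { rewrite HPhi. fold y. rewrite Rabs_mult.
      rewrite (Rabs_right (Rpower _ _)) by (apply Rle_ge; left; apply exp_pos).
      rewrite Rabs_right by lra.
      assert (0 < exp (- Sx * t)) by apply exp_pos.
      unfold c. assert (0 < exp (- Sx * ln 2)) by apply exp_pos.
      apply Rle_trans with (exp (- Sx * ln 2) * exp (- Sx * t) * (1 / 2)); [lra|].
      apply Rmult_le_compat; try lra. apply Rmult_le_pos; lra. }
    assert (Hexp : 1 <= exp (2 / r * p * t) * exp (- Sx * t)).
    { rewrite <- exp_plus, <- exp_0. apply exp_le'.
      assert (2 / r * p - Sx >= 0).
      { unfold Sx. assert (2 / r * p = (2 / r - 1) * p + p) by ring. lra. }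
      nra. }
    assert (Hfin : (1 + t) * c <= (1 + t) ^ 1 * exp (2 / r * p * t) * Rabs (Phi0 m1p m1m m2p m2m k t)).
    { simpl pow. rewrite Rmult_1_r.
      assert (0 < exp (2 / r * p * t)) by apply exp_pos.
      apply Rle_trans with ((1 + t) * (exp (2 / r * p * t) * (c * exp (- Sx * t)))).
      - apply Rmult_le_compat_l; [lra|]. nra.
      - rewrite (Rmult_assoc (1 + t)). apply Rmult_le_compat_l; [lra|].
        apply Rmult_le_compat_l; lra. }
    change (rho m1p m1m m2p m2m) with p in HC. lra.
  - intros [_ Hg]. split.
    + intros m t. apply (ex_derive_n_ext (evalT l0)).
      * intros s. rewrite HPhi. unfold l0. rewrite l0_evalT. reflexivity.
      * apply evalT_smooth.
    + intros j n.
      set (lj := Nat.iter j (LL m1p m1m m2p m2m) l0).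
      assert (Hord : ordinv (- Sx) lj) by (apply iter_ordinv, l0_ordinv).
      assert (Hd : 0 < Sx - 2 / r * p).
      { unfold gam in Hg. change (rho m1p m1m m2p m2m) with p in Hg. unfold Sx. assert (2 / r * p = (2 / r - 1) * p + p) by ring. lra. }
      destruct (poly_exp n _ Hd) as [M HM].
      exists (sabs lj * exp (Sx * ln 2) * M).
      intros t Ht.
      assert (Hrep : forall x, 0 < x -> Phi0 m1p m1m m2p m2m k x = evalU l0 (cosh x)).
      { intros x Hx. rewrite HPhi. unfold l0. apply l0_evalU. apply cosh_pos. }
      rewrite (iter_rep m1p m1m m2p m2m _ _ Hrep j t Ht). fold lj.
      assert (H1 := evalU_bound Sx lj (cosh t) (cosh_gt1 t Ht) Hord).
      assert (H2 := Rpower_cosh_bound Sx t ltac:(unfold Sx; lra)).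
      assert (H3 := HM t ltac:(lra)).
      assert (Hs := sabs_nonneg lj).
      assert (He1 : 0 < exp (2 / r * p * t)) by apply exp_pos.
      assert (He2 : 0 < exp (Sx * ln 2)) by apply exp_pos.
      assert (Hpn : 0 <= (1 + t) ^ n) by (apply pow_le; lra).
      assert (E : exp (2 / r * p * t) * exp (- Sx * t) = exp (- (Sx - 2 / r * p) * t)).
      { rewrite <- exp_plus. f_equal. ring. }
      apply Rle_trans with ((1 + t) ^ n * exp (2 / r * p * t) * (sabs lj * (exp (Sx * ln 2) * exp (- Sx * t)))).
      * apply Rmult_le_compat_l; [apply Rmult_le_pos; lra|].
        eapply Rle_trans; [exact H1|]. apply Rmult_le_compat_l; auto.
      * replace ((1 + t) ^ n * exp (2 / r * p * t) * (sabs lj * (exp (Sx * ln 2) * exp (- Sx * t))))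
          with (sabs lj * exp (Sx * ln 2) * ((1 + t) ^ n * (exp (2 / r * p * t) * exp (- Sx * t)))) by ring.
        rewrite E. apply Rmult_le_compat_l; [apply Rmult_le_pos; lra|]. exact H3.
Qed.
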